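(* Let $\mathbf x_1,\dots,\mathbf x_n\in\mathbb C^N$ be orthonormal with $n\le N$, $\mathbf X=[\mathbf x_1\ \cdots\ \mathbf x_n]$, $\mathbf Y=[\mathrm{Re}(\mathbf X)\ \ \mathrm{Im}(\mathbf X)]\in\mathbb R^{N\times 2n}$ and $\mathbf A=\mathbf X^T\mathbf X\mathbf X^H\mathbf X^*$. Then the $2n$ eigenvalues of $\mathbf Y^T\mathbf Y$ are $$\Big\{\tfrac{1+\sqrt{\lambda_k(\mathbf A)}}{2},\ \tfrac{1-\sqrt{\lambda_k(\mathbf A)}}{2}\ :\ k=1,\dots,n\Big\}.$$
   Context: $^*$ denotes entrywise conjugation; $\lambda_k(\mathbf A)$ are the eigenvalues of the Hermitian positive semidefinite matrix $\mathbf A$. *)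

(* Defs.v *)
(* The complex field is modelled by an arbitrary
   numClosedFieldType C (e.g. algC), with conjugation Num.conj,
   real/imaginary parts 'Re/'Im and the principal square root sqrtC. *)
From HB Require Import structures.
From mathcomp Require Import all_boot all_order all_algebra.
Set Implicit Arguments. Unset Strict Implicit. Unset Printing Implicit Defensive.
Import Order.TTheory GRing.Theory Num.Theory.
Local Open Scope ring_scope.

Definition conjmx (C : numClosedFieldType) m n (X : 'M[C]_(m, n)) : 'M[C]_(m, n) :=
  map_mx Num.conj X.

Definition adjmx (C : numClosedFieldType) m n (X : 'M[C]_(m, n)) : 'M[C]_(n, m) :=
  (conjmx X)^T.

(* Y = [Re X  Im X]  (real matrix, viewed inside C) *)
Definition reim_mx (C : numClosedFieldType) m n (X : 'M[C]_(m, n)) : 'M[C]_(m, n + n) :=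
  row_mx (map_mx (fun z => 'Re z) X) (map_mx (fun z => 'Im z) X).

Definition Amx (C : numClosedFieldType) m n (X : 'M[C]_(m, n)) : 'M[C]_n :=
  X^T *m X *m adjmx X *m conjmx X.

(* Main.v *)
From Pilot Require Import Defs.
From HB Require Import structures.
From mathcomp Require Import all_boot all_order all_algebra.
Set Implicit Arguments. Unset Strict Implicit. Unset Printing Implicit Defensive.
Import Order.TTheory GRing.Theory Num.Theory.
Local Open Scope ring_scope.

Lemma det_block_sc (F : fieldType) n (c : F) (P Q : 'M[F]_n) : c != 0 ->
  \det (block_mx c%:M P Q c%:M) = \det ((c ^+ 2)%:M - Q *m P).
Proof.
move=> c0.
set L := block_mx (1 : 'M[F]_n) 0 (- c^-1 *: Q) 1.
have dL : \det L = 1 by rewrite det_lblock !det1 mulr1.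
rewrite -[LHS]mul1r -dL -det_mulmx mulmx_block !mul1mx !mul0mx !addr0.

rewrite mul_mx_scalar scalerA mulrN mulfV // scaleN1r addNr.
rewrite det_ublock det_scalar.
have -> : - c^-1 *: Q *m P + c%:M = c^-1 *: ((c ^+ 2)%:M - Q *m P).
  rewrite scalerBr scale_scalar_mx expr2 mulKf // addrC -scalemxAl scaleNr.
  by [].
by rewrite detZ mulrA -exprMn mulfV // expr1n mul1r.
Qed.

Lemma horner_char (R : comNzRingType) n (A : 'M[R]_n) x :
  (char_poly A).[x] = \det (x%:M - A).
Proof.
rewrite /char_poly -horner_evalE -det_map_mx; congr (\det _).
by apply/matrixP => i j; rewrite !mxE /= horner_evalE hornerD hornerN hornerMn hornerX hornerC.
Qed.

Notation cj := Pilot.Defs.conjmx.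
Section Main.
Variables (C : numClosedFieldType) (N n : nat) (X : 'M[C]_(N, n)).
Hypothesis hX : adjmx X *m X = 1%:M.

Let Y := reim_mx X.
Let S := block_mx (1 : 'M[C]_n) 1 ('i%:M) ((- 'i)%:M).
Let S' := block_mx (1 : 'M[C]_n) 1 ((- 'i)%:M) ('i%:M).

Lemma YS : Y *m S = row_mx X (cj X).
Proof.
rewrite /Y /reim_mx mul_row_block !mulmx1 !mul_mx_scalar.
congr row_mx; apply/matrixP => i j; rewrite !mxE.
  exact/esym/Crect.
by rewrite mulNr [in RHS](Crect (X i j)) conjC_rect.
Qed.

Lemma YS' : Y *m S' = row_mx (cj X) X.
Proof.
rewrite /Y /reim_mx mul_row_block !mulmx1 !mul_mx_scalar.
congr row_mx; apply/matrixP => i j; rewrite !mxE.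
  by rewrite mulNr [in RHS](Crect (X i j)) conjC_rect.
exact/esym/Crect.
Qed.

Lemma SYYS : S'^T *m (Y^T *m Y) *m S =
  block_mx 1 ((cj X)^T *m cj X) (X^T *m X) 1.
Proof.
rewrite !mulmxA -mulmxA -trmx_mul YS' YS tr_row_mx mul_col_row.
have h1 : (cj X)^T *m X = 1 by exact: hX.
by rewrite h1 -[X^T *m cj X]trmxK trmx_mul trmxK h1 trmx1.
Qed.

Lemma SS : S'^T *m S = (2%:R : C)%:M.
Proof.
rewrite tr_block_mx !tr_scalar_mx mulmx_block -!scalar_mxM -!raddfD /= !mulr1 !mulrN !mulNr mulCii !opprK subrr.
by rewrite [RHS]scalar_mx_block !raddf0.
Qed.

Lemma key x : x *+ 2 - 1 != 0 ->
  \det (x%:M - Y^T *m Y) * 2%:R ^+ (n + n) = \det (((x *+ 2 - 1) ^+ 2)%:M - Amx X).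
Proof.
move=> c0.
have e1 : \det (S'^T *m (x%:M - Y^T *m Y) *m S) = \det (x%:M - Y^T *m Y) * 2%:R ^+ (n + n).
  by rewrite !det_mulmx mulrAC -det_mulmx SS det_scalar mulrC.
rewrite -e1 mulmxBr mulmxBl SYYS mul_mx_scalar -scalemxAl SS scale_scalar_mx.
rewrite [(_ * _)%:M]scalar_mx_block opp_block_mx add_block_mx.
have -> : (x * 2%:R)%:M - 1 = (x *+ 2 - 1)%:M :> 'M[C]_n.
  by rewrite raddfB /= mulr_natr.
by rewrite !add0r det_block_sc // mulmxN mulNmx opprK /Amx !mulmxA.
Qed.
End Main.

Lemma term (C : numClosedFieldType) (x s : C) :
  (x - (1 + s) / 2%:R) * (x - (1 - s) / 2%:R) * 2%:R ^+ 2 = (x *+ 2 - 1) ^+ 2 - s ^+ 2.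
Proof.
have h a : (x - a / 2%:R) * 2%:R = x *+ 2 - a.
  by rewrite mulrBl divfK ?pnatr_eq0 // mulr_natr.
rewrite expr2 mulrACA !h subr_sqr opprD addrA; congr (_ * _).
by rewrite opprB addrA addrAC.
Qed.

Lemma nz (C : numClosedFieldType) (i : nat) : ((i.+1)%:R : C) *+ 2 - 1 != 0.
Proof.
have -> : (1 : C) = 1%:R by []. rewrite -mulrnA -natrB ?pnatr_eq0 //.
Qed.

Unset Implicit Arguments.
Set Strict Implicit.

Theorem lemma6 (C : numClosedFieldType) (N n : nat) (X : 'M[C]_(N, n))
  (hnN : (n <= N)%N)
  (hX : adjmx X *m X = 1%:M)
  (lam : n.-tuple C)
  (hlam : char_poly (Amx X) = \prod_(k < n) ('X - (tnth lam k)%:P)) :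
  char_poly ((reim_mx X)^T *m reim_mx X) =
  \prod_(k < n) (('X - ((1 + sqrtC (tnth lam k)) / 2)%:P) *
                 ('X - ((1 - sqrtC (tnth lam k)) / 2)%:P)).
Proof.
set p := char_poly _; set q := \prod_(k < n) _.
have ev x : x *+ 2 - 1 != 0 -> p.[x] = q.[x].
  move=> c0; rewrite /p horner_char.
  have h2 : (2%:R : C) ^+ (n + n) != 0 by rewrite expf_neq0 // pnatr_eq0.
  apply: (mulIf h2); rewrite key // -horner_char hlam !horner_prod.
  rewrite addnn -muln2 mulnC exprM.
  have -> : (2%:R : C) ^+ 2 ^+ n = \prod_(k < n) 2%:R ^+ 2 by rewrite prodr_const card_ord.
  rewrite -big_split /=.
  apply: eq_bigr => k _; rewrite hornerM !hornerXsubC term sqrtCK //.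
apply/eqP; rewrite -subr_eq0; apply/eqP.
apply: (@roots_geq_poly_eq0 _ _ [seq (i.+1)%:R | i <- iota 0 (size (p - q))]).
- apply/allP => r /mapP [i _ ->]; rewrite /root hornerD hornerN ev ?subrr //.
  exact: nz.
- rewrite map_inj_uniq ?iota_uniq // => i j /eqP; rewrite eqr_nat => /eqP [].
  by [].
- by rewrite size_map size_iota.
Qed.
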